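(* Let $0\le j_2\le j_1$ be integers (so $(j_1,j_2,j_1-j_2)$ is admissible). Then $$\phi_{j_1,j_2,j_1-j_2}(x_{12},x_{13},1)=\sum_{a=0}^{j_2}\sum_{b=0}^{j_1-j_2}c_{a,b}\,(x_{12}+x_{12}^{-1})^{j_2-a}(x_{13}+x_{13}^{-1})^{j_1-j_2-b},$$ where $c_{a,b}=0$ if $a+b$ is odd, and if $a+b$ is even $$c_{a,b}=(-1)^{(a+b)/2}\binom{j_2}{a}\binom{j_1-j_2}{b}\frac{\left(j_1-\frac{a+b}{2}\right)!}{(j_1+1)!}\cdot\frac{(a+b)!}{\left(\frac{a+b}{2}\right)!}.$$
   Context: A triple $(j_1,j_2,j_3)$ of nonnegative integers is admissible if $|j_1-j_2|\le j_3\le j_1+j_2$ and $j_1+j_2+j_3$ is even; $\mathbf J$ denotes the set of admissible triples. Let $\mathcal H=\mathbb C[x_{12}+x_{12}^{-1},x_{13}+x_{13}^{-1},x_{23}+x_{23}^{-1}]\subset\mathbb C[x_{12}^{\pm1},x_{13}^{\pm1},x_{23}^{\pm1}]$. For $a,b\in\{\pm1\}$ set $K_{a,b}(j_1,j_2,j_3)=ab\,\frac{(aj_1+bj_2+j_3+a+b+2)(aj_1+bj_2-j_3+a+b)}{4(j_1+1)(j_2+1)}$. The genus two Schur polynomials $(\phi_{j_1,j_2,j_3})_{(j_1,j_2,j_3)\in\mathbf J}$ are the unique family in $\mathcal H$ with $\phi_{0,0,0}=1$ such that for all admissible $(j_1,j_2,j_3)$: $(x_{12}+x_{12}^{-1})\phi_{j_1,j_2,j_3}=\sum_{a,b\in\{\pm1\}}K_{a,b}(j_1,j_2,j_3)\phi_{j_1+a,j_2+b,j_3}$,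 $(x_{13}+x_{13}^{-1})\phi_{j_1,j_2,j_3}=\sum_{a,b\in\{\pm1\}}K_{a,b}(j_1,j_3,j_2)\phi_{j_1+a,j_2,j_3+b}$, $(x_{23}+x_{23}^{-1})\phi_{j_1,j_2,j_3}=\sum_{a,b\in\{\pm1\}}K_{a,b}(j_2,j_3,j_1)\phi_{j_1,j_2+a,j_3+b}$, where $\phi$ of a non-admissible triple is interpreted as $0$. *)

(* Defs.v *)
From HB Require Import structures.
From mathcomp Require Import all_boot all_order all_algebra.
From mathcomp Require Import complex.
From mathcomp Require Import Rstruct.
From mathcomp Require Import mpoly.
Set Implicit Arguments. Unset Strict Implicit. Unset Printing Implicit Defensive.
Import Order.TTheory GRing.Theory Num.Theory.
Local Open Scope ring_scope.

Notation C := (complex Rdefinitions.R).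

(* The ring H = C[x12+x12^-1, x13+x13^-1, x23+x23^-1] is a polynomial ring
   in the three algebraically independent elements
   y12 = x12+x12^-1, y13 = x13+x13^-1, y23 = x23+x23^-1.
   We represent H as {mpoly C[3]}, variable 0 = y12, 1 = y13, 2 = y23. *)
Notation HH := {mpoly C[3]}.
Definition y12 : HH := 'X_(@Ordinal 3 0 isT).
Definition y13 : HH := 'X_(@Ordinal 3 1 isT).
Definition y23 : HH := 'X_(@Ordinal 3 2 isT).

(* admissible triples (indices as integers, so that j+a with a = -1 makes sense) *)
Definition admissible (j1 j2 j3 : int) : bool :=
  [&& 0 <= j1, 0 <= j2, 0 <= j3,
      `|j1 - j2| <= j3, j3 <= j1 + j2 & (2 %| j1 + j2 + j3)%Z].

Definition ext (phi : int -> int -> int -> HH) (j1 j2 j3 : int) : HH :=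
  if admissible j1 j2 j3 then phi j1 j2 j3 else 0.

Definition K (a b j1 j2 j3 : int) : C :=
  ((a * b) * (a * j1 + b * j2 + j3 + a + b + 2) * (a * j1 + b * j2 - j3 + a + b))%:~R
  / (4 * (j1 + 1) * (j2 + 1))%:~R.

Definition signs : seq int := [:: 1; -1].

Definition is_genus2_schur (phi : int -> int -> int -> HH) : Prop :=
  phi 0 0 0 = 1 /\
  forall j1 j2 j3 : int, admissible j1 j2 j3 ->
    [/\ y12 * phi j1 j2 j3 =
          \sum_(a <- signs) \sum_(b <- signs)
             K a b j1 j2 j3 *: ext phi (j1 + a) (j2 + b) j3,
        y13 * phi j1 j2 j3 =
          \sum_(a <- signs) \sum_(b <- signs)
             K a b j1 j3 j2 *: ext phi (j1 + a) j2 (j3 + b) &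
        y23 * phi j1 j2 j3 =
          \sum_(a <- signs) \sum_(b <- signs)
             K a b j2 j3 j1 *: ext phi j1 (j2 + a) (j3 + b)].

(* Setting x23 = 1 means y23 = 1 + 1^-1 = 2. *)
Definition at_x23_1 (p : HH) : HH := p \mPo [tuple y12; y13; 2%:MP].

Definition coef_c (j1 j2 a b : nat) : C :=
  if odd (a + b) then 0 else
  (-1) ^+ ((a + b) %/ 2) * ('C(j2, a))%:R * ('C(j1 - j2, b))%:R
  * ((j1 - (a + b) %/ 2)`!)%:R / ((j1 + 1)`!)%:R
  * ((a + b)`!)%:R / (((a + b) %/ 2)`!)%:R.

(* Main.v *)
Require Import Defs.
From HB Require Import structures.
From mathcomp Require Import all_boot all_order all_algebra.
From mathcomp Require Import complex Rstruct mpoly.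
From mathcomp Require Import zify ring lra.
Import Order.TTheory GRing.Theory Num.Theory.
Local Open Scope ring_scope.


Definition mono (a b : nat) : HH := y12 ^+ a * y13 ^+ b.
Definition S (M : nat) (f : nat -> nat -> C) : HH :=
  \sum_(a < M) \sum_(b < M) f a b *: mono a b.

Lemma S_eq M f g : (forall a b, f a b = g a b) -> S M f = S M g.
Proof. by move=> h; apply: eq_bigr => a _; apply: eq_bigr => b _; rewrite h. Qed.

Lemma S_add M f g : S M f + S M g = S M (fun a b => f a b + g a b).
Proof.
rewrite /S -big_split /=; apply: eq_bigr => a _.
by rewrite -big_split /=; apply: eq_bigr => b _; rewrite scalerDl.
Qed.

Lemma S_scale M c f : c *: S M f = S M (fun a b => c * f a b).
Proof.
rewrite /S scaler_sumr; apply: eq_bigr => a _.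
by rewrite scaler_sumr; apply: eq_bigr => b _; rewrite scalerA.
Qed.

Definition supp (M : nat) (f : nat -> nat -> C) :=
  forall a b, (M <= a)%N || (M <= b)%N -> f a b = 0.

Lemma S_succ M f : supp M f -> S M.+1 f = S M f.
Proof.
move=> hf; rewrite /S big_ord_recr /=.
rewrite [X in _ + X]big1 ?addr0; last first.
  by move=> b _; rewrite hf ?scale0r // leqnn.
apply: eq_bigr => a _; rewrite big_ord_recr /= hf ?scale0r ?addr0 //.
by rewrite leqnn orbT.
Qed.

Lemma supp_succ M f : supp M f -> supp M.+1 f.
Proof. move=> hf a b h; apply: hf; case/orP: h => h; apply/orP; [left|right]; exact: ltnW. Qed.

Lemma S_widen M k f : supp M f -> S (M + k) f = S M f.
Proof.
move=> hf; elim: k => [|k IH]; first by rewrite addn0.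
rewrite addnS S_succ // => a b h; apply: hf.
case/orP: h => h; apply/orP; [left|right]; exact: leq_trans (leq_addr _ _) h.
Qed.

Lemma S_widen' M M' f : supp M f -> (M <= M')%N -> S M' f = S M f.
Proof. move=> hf /subnKC <-; exact: S_widen. Qed.

Definition sh1 (f : nat -> nat -> C) a b := if a is a'.+1 then f a' b else 0.
Definition sh2 (f : nat -> nat -> C) a b := if b is b'.+1 then f a b' else 0.

Lemma S_mul12 M f : supp M f -> y12 * S M f = S M.+1 (sh1 f).
Proof.
move=> hf; rewrite /S big_ord_recl /=.
rewrite [X in X + _]big1 ?add0r; last first.
  by move=> b _; rewrite /sh1 /= scale0r.
rewrite mulr_sumr; apply: eq_bigr => a _.
rewrite big_ord_recr /= hf ?scale0r ?addr0; last by rewrite leqnn orbT.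
rewrite mulr_sumr; apply: eq_bigr => b _.
by rewrite /bump /= add0n add1n scalerAr /mono mulrA exprS scalerAr.
Qed.

Lemma S_mul13 M f : supp M f -> y13 * S M f = S M.+1 (sh2 f).
Proof.
move=> hf; rewrite /S big_ord_recr /=.
rewrite [X in _ + X]big1 ?addr0; last first.
  by move=> [[|b] hb] _; rewrite /sh2 /= ?hf ?scale0r // leqnn.
rewrite mulr_sumr; apply: eq_bigr => a _.
rewrite big_ord_recl /= scale0r add0r.
rewrite mulr_sumr; apply: eq_bigr => b _.
by rewrite /bump /= add0n add1n /mono /= exprS -!scalerAr mulrCA.
Qed.
Definition hk (N k : nat) : C :=
  (-1) ^+ k * ((N - k)`!)%:R * ((k.*2)`!)%:R / (((N.+1)`!)%:R * (k`!)%:R).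
Definition h (N d : nat) : C :=
  if (d <= N)%N && ~~ odd (N - d) then hk N ((N - d)./2) else 0.

Lemma nz (k : nat) : (k.+1)%:R != 0 :> C.
Proof. by rewrite pnatr_eq0. Qed.
Lemma fnz (k : nat) : (k`!)%:R != 0 :> C.
Proof. by rewrite pnatr_eq0 -lt0n fact_gt0. Qed.

Ltac nzt := repeat (apply/andP; split); repeat (rewrite -natrD || rewrite -natrM || rewrite nat1r || rewrite natr1); rewrite ?pnatr_eq0 -?lt0n ?fact_gt0 //; lia.

Lemma h_val N d k : N = (d + k.*2)%N -> h N d = hk N k.
Proof.
move=> ->; rewrite /h leq_addr /= addKn odd_double /= doubleK //.
Qed.

Lemma h_big N d : (N < d)%N -> h N d = 0.
Proof. by move=> hd; rewrite /h leqNgt hd. Qed.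

Lemma h_odd N d : odd (N - d) -> h N d = 0.
Proof. by move=> hd; rewrite /h hd andbF. Qed.

Lemma hk_succ N k : (k <= N)%N -> hk N.+1 k = hk N k * ((N.+1 - k)%N)%:R / (N.+2)%:R.
Proof.
move=> hkN; rewrite /hk subSn // !factS !natrM.
have h1 := fnz (N - k); have h2 := fnz N; have h3 := fnz k.
have h4 := nz N; have h5 := nz N.+1.
rewrite -subSn //.
have h6 : ((N.+1 - k)%N)%:R != 0 :> C by rewrite pnatr_eq0 subn_eq0 -ltnNge ltnS.
field. nzt.
Qed.

Lemma hk_up N k : (k <= N)%N -> hk N.+1 k.+1 = - hk N k * ((k.*2).+1 * 2)%:R / (N.+2)%:R.
Proof.
move=> hkN; rewrite /hk subSS doubleS !factS !natrM exprS.
have h2 := fnz N; have h3 := fnz k; have h4 := nz N; have h5 := nz N.+1.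
have h6 := nz k. have h7 := fnz (N - k). have h8 := fnz (k.*2).
rewrite -!mul2n. field. nzt.
Qed.

Lemma binR_down n a : (n%:R - a%:R) * ('C(n,a))%:R = (n * 'C(n.-1,a))%:R :> C.
Proof.
case: (leqP a n) => ha.
  by rewrite -natrB // -natrM mul_bin_down.
rewrite bin_small // mulr0 mul_bin_down.
by have -> : (n - a)%N = 0%N by apply/eqP; rewrite subn_eq0 ltnW.
Qed.

Lemma bin_diag' n a : (n.+1 * 'C(n,a) = a.+1 * 'C(n.+1,a.+1))%N.
Proof. exact: (mul_bin_diag n.+1 a). Qed.

Definition cG (n m a b : nat) : C := ('C(n, a) * 'C(m, b))%:R * h (n + m) (a + b).

Definition c1 n m : C := ((n+m).+2)%:R / ((n+m).+1)%:R.
Definition c2 n m : C := (n * (n + 2 * m).+1)%:R / ((n+m).+1 * (n+m).+1)%:R.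
Definition c3 n m : C := (2 * (m * m))%:R / ((n+m).+1 * (n+m).+1)%:R.
Definition c4 n m : C := - (m * m.-1)%:R / ((n+m).+1 * (n+m).+1)%:R.

Lemma h_zero_gen N e d : ~~ ((d <= N + e.*2)%N && ~~ odd (N + e.*2 - d)) -> h N d = 0.
Proof.
rewrite /h; case: ifP => // /andP [h1 h2].
rewrite (leq_trans h1 (leq_addr _ _)) /=.
by rewrite -addnBAC // oddD odd_double addbF h2.
Qed.



Lemma core_zero n m a b :
  ~~ (((a + b) <= (n + m).+1)%N && ~~ odd ((n + m).+1 - (a + b))) ->
  sh1 (cG n m) a b = c1 n m * cG n.+1 m a b + c2 n m * cG n.-1 m a b
     + c3 n m * cG n m.-1 a b + c4 n m * cG n.+1 m.-2 a b.
Proof.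
move=> H.
have T0 : sh1 (cG n m) a b = 0.
  case: a H => [|a] H //=; rewrite /cG (h_zero_gen _ 0) ?mulr0 //.
  by rewrite double0 addn0; move: H; rewrite addSn ltnS subSS.
have T1 : cG n.+1 m a b = 0.
  by rewrite /cG (h_zero_gen _ 0) ?mulr0 // double0 addn0 addSn.
have T2 : c2 n m * cG n.-1 m a b = 0.
  case: n {T0 T1} H => [|n] H; first by rewrite /c2 mul0n mul0r mul0r.
  rewrite /cG (h_zero_gen _ 1) ?mulr0 // -pred_Sn; by have -> : (n + m + 1.*2 = (n.+1 + m).+1)%N by lia.
have T3 : c3 n m * cG n m.-1 a b = 0.
  case: m {T0 T1 T2} H => [|m] H; first by rewrite /c3 !mul0n mul0r mul0r.
  rewrite /cG (h_zero_gen _ 1) ?mulr0 // -pred_Sn.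
  by have -> : (n + m + 1.*2 = (n + m.+1).+1)%N by lia.
have T4 : c4 n m * cG n.+1 m.-2 a b = 0.
  case: m {T0 T1 T2 T3} H => [|[|m]] H; rewrite ?/c4 ?muln0 ?mul0n ?oppr0 ?mul0r //.
  rewrite /cG (h_zero_gen _ 1) ?mulr0 //=.
  by have -> : (n.+1 + m + 1.*2 = (n + m.+2).+1)%N by lia.
by rewrite T0 T1 T2 T3 T4 mulr0 !addr0.
Qed.

Lemma bin2R n a : (n%:R - a%:R) * ((n.+1%:R - a%:R) * 'C(n.+1,a)%:R) = (n.+1 * (n * 'C(n.-1,a)))%:R :> C.
Proof. by rewrite binR_down /= natrM mulrCA binR_down -natrM. Qed.

Lemma core_pos n m a b k : ((n + m).+1 = a + b + k.*2)%N ->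
  sh1 (cG n m) a b = c1 n m * cG n.+1 m a b + c2 n m * cG n.-1 m a b
     + c3 n m * cG n m.-1 a b + c4 n m * cG n.+1 m.-2 a b.
Proof.
move=> eN.
set B : C := ('C(n.+1,a) * 'C(m,b))%:R.
have T0 : sh1 (cG n m) a b = a%:R / (n.+1)%:R * B * hk (n+m) k.
  case: a @B eN => [|a] B eN /=; first by rewrite !mul0r.
  rewrite /cG (@h_val _ _ k); last by lia.
rewrite natrM.   have -> : ('C(n,a))%:R = (a.+1)%:R * ('C(n.+1,a.+1))%:R / (n.+1)%:R :> C.
    apply: (mulfI (nz n)); rewrite -[X in X = _]natrM bin_diag' natrM; field; nzt.
  rewrite /B !natrM; field; nzt.
have T1 : c1 n m * cG n.+1 m a b = ((n+m).+1 - k)%N%:R / ((n+m).+1)%:R * B * hk (n+m) k.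
  rewrite /cG (@h_val _ _ k); last by lia.
  rewrite addSn hk_succ; last by lia.
  rewrite /c1 -/B; field; nzt.
case: k eN T0 T1 => [|k] eN T0 T1.
  rewrite double0 addn0 in eN.
  have T2 : c2 n m * cG n.-1 m a b = 0.
    case: n {T0 T1 B} eN => [|n] eN; first by rewrite /c2 mul0n mul0r mul0r.
    by rewrite /cG h_big ?mulr0 //=; lia.
  have T3 : c3 n m * cG n m.-1 a b = 0.
    case: m {T0 T1 T2 B} eN => [|m] eN; first by rewrite /c3 !mul0n mul0r mul0r.
    by rewrite /cG h_big ?mulr0 //=; lia.
  have T4 : c4 n m * cG n.+1 m.-2 a b = 0.
    case: m {T0 T1 T2 T3 B} eN => [|[|m]] eN; rewrite ?/c4 ?muln0 ?mul0n ?oppr0 ?mul0r //.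
    by rewrite /cG h_big ?mulr0 //=; lia.
  rewrite T0 T1 T2 T3 T4 ?mulr0 !addr0 subn0.
  case: (eqVneq a n.+1) => [ea|ha].
    rewrite ea; field; nzt.
  have -> : B = 0.
    rewrite /B; case: (ltnP n.+1 a) => hh; first by rewrite bin_small.
    by rewrite (@bin_small m b) ?muln0 //; lia.
  by rewrite !mulr0 !mul0r.
rewrite doubleS in eN.
set P := (a + b + k.*2)%N.
have eP : (n + m)%N = P.+1 by rewrite /P; lia.
have HH : hk (n+m) k.+1 = - hk P k * ((k.*2).+1 * 2)%:R / (P.+2)%:R.
  by rewrite eP hk_up //; rewrite /P; lia.
have T2 : c2 n m * cG n.-1 m a b = ((n + 2 * m).+1)%:R / ((n.+1)%:R * ((n+m).+1)%:R * ((n+m).+1)%:R)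
    * ((n%:R - a%:R) * ((n.+1%:R - a%:R) * 'C(n.+1,a)%:R)) * 'C(m,b)%:R * hk P k.
  rewrite bin2R; case: n {T0 T1 B HH} eN eP => [|n] eN eP.
    by rewrite /c2 !mul0n !muln0 !mulr0 !mul0r.
  rewrite /cG /= (_ : (n + m)%N = P); last by rewrite /P in eP *; lia.
  rewrite (@h_val P _ k) // /c2 !natrM; field; nzt.
have T3 : c3 n m * cG n m.-1 a b = (2 * m)%:R / ((n.+1)%:R * ((n+m).+1)%:R * ((n+m).+1)%:R)
    * ((n.+1%:R - a%:R) * 'C(n.+1,a)%:R) * ((m%:R - b%:R) * 'C(m,b)%:R) * hk P k.
  rewrite !binR_down /=; case: m {T0 T1 T2 B HH} eN eP => [|m] eN eP.
    by rewrite /c3 !mul0n !muln0 !mulr0 !mul0r.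
  rewrite /cG /= (_ : (n + m)%N = P); last by rewrite /P in eP *; lia.
  rewrite (@h_val P _ k) // /c3 !natrM; field; nzt.
have T4 : c4 n m * cG n.+1 m.-2 a b = - 1 / (((n+m).+1)%:R * ((n+m).+1)%:R) * ('C(n.+1,a))%:R
    * ((m%:R - 1 - b%:R) * ((m%:R - b%:R) * 'C(m,b)%:R)) * hk P k.
  rewrite binR_down; case: m {T0 T1 T2 T3 B HH} eN eP => [|[|m]] eN eP.
  - by rewrite /c4 /= ?(muln0, mul0n, mulr0n, subrr, sub0r, oppr0, mul0r, mulr0).
  - move: P eN eP; case: b => [|b] P eN eP; rewrite /c4 /= ?(bin0n, muln0, mul0n, mulr0n, subrr, sub0r, oppr0, mul0r, mulr0, addr0) //.
  have e1 : (m.+2%:R - 1 : C) = m.+1%:R by rewrite -(natr1 m.+1) addrK.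
  rewrite e1 natrM /= [(m.+1%:R - _) * _]mulrCA binR_down /=.
  rewrite /cG /= (_ : (n.+1 + m)%N = P); last by rewrite /P in eP *; lia.
  rewrite (@h_val P _ k) // /c4 !natrM /=; field; nzt.
have hm : (m%:R : C) = (P.+1)%:R - n%:R.
  by rewrite -eP natrD addrC addKr.
rewrite T0 T1 T2 T3 T4 HH natrB; last by rewrite /P in eP; lia.
rewrite /B natrM.
set H := hk _ k.
rewrite -[(n + 2 * m).+1]addn1 !natrD !natrM eP hm.
rewrite /P -!mul2n.
field. nzt.
Qed.

Lemma core n m a b :
  sh1 (cG n m) a b = c1 n m * cG n.+1 m a b + c2 n m * cG n.-1 m a b
     + c3 n m * cG n m.-1 a b + c4 n m * cG n.+1 m.-2 a b.
Proof.
case: (boolP (((a + b) <= (n + m).+1)%N && ~~ odd ((n + m).+1 - (a + b)))) => [/andP [h1 h2]|hz].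
  apply: (@core_pos _ _ _ _ (((n + m).+1 - (a + b))./2)).
  have := odd_double_half ((n + m).+1 - (a + b)); rewrite (negbTE h2) add0n => e.
  by rewrite e subnKC.
exact: core_zero.
Qed.

Definition b1 m : C := (m.+2)%:R / (m.+1)%:R.
Definition b2 m : C := m%:R / (m.+1)%:R.

Lemma base_id m a b : sh2 (cG 0 m) a b = b1 m * cG 0 m.+1 a b + b2 m * cG 0 m.-1 a b.
Proof.
case: a => [|a]; last first.
  by case: b => [|b]; rewrite /cG /= ?bin0n /= ?mul0n ?mul0r ?mulr0 ?addr0.
case: (boolP ((b <= m.+1)%N && ~~ odd (m.+1 - b))) => [/andP [h1 h2]|hz].
  set k := (m.+1 - b)./2.
  have eN : m.+1 = (b + k.*2)%N.
    have := odd_double_half (m.+1 - b); rewrite (negbTE h2) add0n => e.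
    by rewrite /k e subnKC.
  clearbody k.
  set B : C := ('C(m.+1,b))%:R.
  have T0 : sh2 (cG 0 m) 0 b = b%:R / (m.+1)%:R * B * hk m k.
    case: b @B eN {h1 h2} => [|b] B eN /=; first by rewrite !mul0r.
    rewrite /cG (@h_val _ _ k) /= ?add0n; last by lia.
    rewrite ?natrM bin0 mul1r. have -> : ('C(m,b))%:R = (b.+1)%:R * ('C(m.+1,b.+1))%:R / (m.+1)%:R :> C.
      apply: (mulfI (nz m)); rewrite -[X in X = _]natrM bin_diag' natrM; field; nzt.
    rewrite /B; field; nzt.
  have T1 : b1 m * cG 0 m.+1 0 b = ((m.+1 - k)%N)%:R / (m.+1)%:R * B * hk m k.
    rewrite /cG (@h_val _ _ k) /= ?add0n; last by lia.
    rewrite hk_succ; last by lia.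
    rewrite /b1 -/B mul1n; field; nzt.
  case: k eN T0 T1 => [|k] eN T0 T1.
    rewrite double0 addn0 in eN.
    have T2 : b2 m * cG 0 m.-1 0 b = 0.
      case: m {T0 T1 B h1 h2} eN => [|m] eN; first by rewrite /b2 !mul0r.
      by rewrite /cG h_big ?mulr0 //=; lia.
    rewrite T0 T1 T2 addr0 subn0 -eN; field; nzt.
  rewrite doubleS in eN.
  clear h1 h2; move: @B T0 T1 eN; case: m => [|m] B T0 T1 eN; first by lia.
  have em : m = (b + k.*2)%N by lia.
  subst m.
  set P := (b + k.*2)%N in T0 T1 *.
  have HH : hk P.+1 k.+1 = - hk P k * ((k.*2).+1 * 2)%:R / (P.+2)%:R.
    by rewrite hk_up //; rewrite /P; lia.
  have T2 : b2 P.+1 * cG 0 P 0 b = 1 / ((P.+2)%:R * (P.+2)%:R)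
    * ((P.+1%:R - b%:R) * ((P.+2%:R - b%:R) * 'C(P.+2,b)%:R)) * hk P k.
    rewrite bin2R /cG /= (@h_val P _ k) // /b2 !mul1n !natrM; field; nzt.
  rewrite /= T0 T1 T2 HH natrB; last by rewrite /P; lia.
  rewrite /B /P -!mul2n.
  field. nzt.
have Z0 : sh2 (cG 0 m) 0 b = 0.
  case: b hz => [|b] hz //=; rewrite /cG (h_zero_gen _ 0) ?mulr0 //.
  by rewrite double0 addn0; move: hz; rewrite ltnS subSS.
have Z1 : cG 0 m.+1 0 b = 0.
  by rewrite /cG (h_zero_gen _ 0) ?mulr0 // double0 addn0.
have Z2 : b2 m * cG 0 m.-1 0 b = 0.
  case: m {Z0 Z1} hz => [|m] hz; first by rewrite /b2 !mul0r.
  rewrite /cG (h_zero_gen _ 1) ?mulr0 //=.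
  by have -> : (m + 1.*2 = m.+2)%N by lia.
by rewrite Z0 Z1 Z2 mulr0 addr0.
Qed.


Definition G n m : HH := S (n + m).+1 (cG n m).

Lemma supp_cG n m M : (n < M)%N -> (m < M)%N -> supp M (cG n m).
Proof.
move=> hn hm a b /orP [] h; rewrite /cG.
  by rewrite bin_small ?mul0n ?mul0r //; exact: leq_trans hn h.
by rewrite (@bin_small m b) ?muln0 ?mul0r //; exact: leq_trans hm h.
Qed.

Lemma G_S n m M : ((n + m) < M)%N -> G n m = S M (cG n m).
Proof.
move=> h; rewrite /G (@S_widen' (n+m).+1 M) //.
by apply: supp_cG; rewrite ltnS ?leq_addr ?leq_addl.
Qed.

Lemma G_step n m : y12 * G n m = c1 n m *: G n.+1 m + c2 n m *: G n.-1 m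
   + c3 n m *: G n m.-1 + c4 n m *: G n.+1 m.-2.
Proof.
rewrite (@G_S n m (n + m).+2) // S_mul12; last by apply: supp_cG; lia.
rewrite !(@G_S _ _ (n + m).+3); try lia.
rewrite !S_scale !S_add; apply: S_eq => a b; exact: core.
Qed.

Lemma G_base m : y13 * G 0 m = b1 m *: G 0 m.+1 + b2 m *: G 0 m.-1.
Proof.
rewrite (@G_S 0 m m.+2) // S_mul13; last by apply: supp_cG; lia.
rewrite !(@G_S _ _ m.+3); try lia.
rewrite !S_scale !S_add; apply: S_eq => a b; exact: base_id.
Qed.

Lemma G00 : G 0 0 = 1.
Proof.
rewrite /G /S !big_ord1 /mono /= !expr0 mulr1.
rewrite /cG /h /= /hk /= !mulr1 mul1r.
have -> : (1 / 1 : C) = 1 by rewrite divr1.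
by rewrite scale1r.
Qed.


Ltac Kt := rewrite /K !(intrM, intrD, intrN) /= -?pmulrn; field; nzt.

Lemma at_mul p q : at_x23_1 (p * q) = at_x23_1 p * at_x23_1 q.
Proof. by rewrite /at_x23_1 rmorphM. Qed.
Lemma at_add p q : at_x23_1 (p + q) = at_x23_1 p + at_x23_1 q.
Proof. by rewrite /at_x23_1 raddfD. Qed.
Lemma at_scale c p : at_x23_1 (c *: p) = c *: at_x23_1 p.
Proof. by rewrite /at_x23_1 comp_mpolyZ. Qed.
Lemma at_y12 : at_x23_1 y12 = y12.
Proof. by rewrite /at_x23_1 /y12 comp_mpolyXU. Qed.
Lemma at_y13 : at_x23_1 y13 = y13.
Proof. by rewrite /at_x23_1 /y13 comp_mpolyXU. Qed.
Lemma at_y23 : at_x23_1 y23 = 2%:MP.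
Proof. by rewrite /at_x23_1 /y23 comp_mpolyXU. Qed.

Lemma K1 (n m : nat) : K 1 1 (n+m)%:Z n%:Z m%:Z = c1 n m.
Proof. rewrite /c1; Kt. Qed.
Lemma K2 (n m : nat) : K 1 (-1) (n+m)%:Z n%:Z m%:Z = 0.
Proof. Kt. Qed.
Lemma K3 (n m : nat) : K (-1) 1 (n+m)%:Z n%:Z m%:Z = m%:R / ((n+m).+1 * n.+1)%:R.
Proof. Kt. Qed.
Lemma K4 (n m : nat) : K (-1) (-1) (n+m)%:Z n%:Z m%:Z = n%:R / n.+1%:R.
Proof. Kt. Qed.
Lemma U1 (n m : nat) : K 1 1 n%:Z m%:Z (n+m)%:Z = (n+m).+2%:R / (n.+1 * m.+1)%:R.
Proof. Kt. Qed.
Lemma U2 (n m : nat) : K 1 (-1) n%:Z m%:Z (n+m)%:Z = m%:R / m.+1%:R.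
Proof. Kt. Qed.
Lemma U3 (n m : nat) : K (-1) 1 n%:Z m%:Z (n+m)%:Z = n%:R / n.+1%:R.
Proof. Kt. Qed.
Lemma U4 (n m : nat) : K (-1) (-1) n%:Z m%:Z (n+m)%:Z = 0.
Proof. Kt. Qed.
Lemma V1 (m : nat) : K 1 1 m%:Z m%:Z 0 = b1 m.
Proof. rewrite /b1; Kt. Qed.
Lemma V2 (m : nat) : K 1 (-1) m%:Z m%:Z 0 = 0.
Proof. Kt. Qed.
Lemma V3 (m : nat) : K (-1) 1 m%:Z m%:Z 0 = 0.
Proof. Kt. Qed.
Lemma V4 (m : nat) : K (-1) (-1) m%:Z m%:Z 0 = b2 m.
Proof. rewrite /b2; Kt. Qed.

Lemma adm_edge (a b c : int) (n m : nat) : a = (n+m)%:Z -> b = n%:Z -> c = m%:Z -> admissible a b c.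
Proof.
move=> -> -> ->; rewrite /admissible.
have h2: ((n + m)%:Z + n%:Z + m%:Z)%R = 2 * (n+m)%:Z by lia.
rewrite h2 dvdz_mulr ?dvdzz // andbT.
lia.
Qed.

Lemma adm_off (a b c : int) (p q : nat) : a = (p+q)%:Z -> b = p.+1%:Z -> c = q.+1%:Z -> admissible a b c.
Proof.
move=> -> -> ->; rewrite /admissible.
have h2: ((p + q)%:Z + p.+1%:Z + q.+1%:Z)%R = 2 * (p+q).+1%:Z by lia.
rewrite h2 dvdz_mulr ?dvdzz // andbT.
lia.
Qed.

Lemma ext_adm phi a b c : admissible a b c -> ext phi a b c = phi a b c.
Proof. by rewrite /ext => ->. Qed.

Definition F (phi : int -> int -> int -> HH) n m := at_x23_1 (phi (n + m)%:Z n%:Z m%:Z).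

Lemma F_step phi : is_genus2_schur phi -> forall n m,
  y12 * F phi n m = c1 n m *: F phi n.+1 m + c2 n m *: F phi n.-1 m
   + c3 n m *: F phi n m.-1 + c4 n m *: F phi n.+1 m.-2.
Proof.
move=> [_ Hr] n m.
have [E12 _ _] := Hr _ _ _ (@adm_edge _ _ _ n m erefl erefl erefl).
have E := congr1 at_x23_1 E12.
rewrite at_mul at_y12 /signs in E. rewrite !big_cons !big_nil !addr0 !at_add !at_scale in E. rewrite (K1 n m) (K2 n m) (K3 n m) (K4 n m) in E.
rewrite scale0r in E.
have e1 : at_x23_1 (ext phi ((n+m)%:Z + 1) (n%:Z + 1) m%:Z) = F phi n.+1 m.
  rewrite ext_adm; last by apply: (@adm_edge _ _ _ n.+1 m); lia.
  by rewrite /F; congr (at_x23_1 (phi _ _ _)); lia.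
have e4 : (n%:R / n.+1%:R) *: at_x23_1 (ext phi ((n+m)%:Z + -1) (n%:Z + -1) m%:Z)
    = (n%:R / n.+1%:R) *: F phi n.-1 m.
  case: n {E E12 e1} => [|n].
     by rewrite !mul0r; apply: (etrans (scale0r _)); apply: esym; exact: scale0r.
  rewrite ext_adm; last by apply: (@adm_edge _ _ _ n m); lia.
  by rewrite /F /=; congr (_ *: at_x23_1 (phi _ _ _)); lia.
rewrite e1 in E. rewrite e4 in E. rewrite [LHS]E.
case: m {E E12 e1 e4} => [|m].
  move: (F phi n.+1 0) (F phi n.-1 0) (F phi n 0.-1) (F phi n.+1 0.-2) => X1 X2 X3 X4.
  move: (at_x23_1 _) => Y.
  have -> : c2 n 0 = n%:R / n.+1%:R by rewrite /c2; field; nzt.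
  have -> : c3 n 0 = 0 by rewrite /c3 !muln0 mul0r.
  have -> : c4 n 0 = 0 by rewrite /c4 mul0n oppr0 mul0r.
  rewrite mul0r (scale0r Y) (scale0r X3) (scale0r X4).
  ring.
have [_ _ E23] := Hr _ _ _ (@adm_edge _ _ _ n m erefl erefl erefl).
have E' := congr1 at_x23_1 E23.
rewrite at_mul at_y23 /signs !big_cons !big_nil !addr0 !at_add !at_scale in E'.
rewrite (U1 n m) (U2 n m) (U3 n m) (U4 n m) scale0r mul_mpolyC in E'.
set A := at_x23_1 (phi (n + m)%:Z n.+1%:Z m.+1%:Z).
have eA1 : at_x23_1 (ext phi ((n + m.+1)%:Z + -1) (n%:Z + 1) m.+1%:Z) = A.
  rewrite ext_adm; last by apply: (@adm_off _ _ _ n m); lia.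
  by rewrite /A; congr (at_x23_1 (phi _ _ _)); lia.
have eA2 : at_x23_1 (ext phi (n + m)%:Z (n%:Z + 1) (m%:Z + 1)) = A.
  rewrite ext_adm; last by apply: (@adm_off _ _ _ n m); lia.
  by rewrite /A; congr (at_x23_1 (phi _ _ _)); lia.
have eU2 : (m%:R / m.+1%:R) *: at_x23_1 (ext phi (n + m)%:Z (n%:Z + 1) (m%:Z + -1))
    = (m%:R / m.+1%:R) *: F phi n.+1 m.-1.
  case: m {E' E23 A eA1 eA2} => [|m].
    by rewrite !mul0r; apply: (etrans (scale0r _)); apply: esym; exact: scale0r.
  rewrite ext_adm; last by apply: (@adm_edge _ _ _ n.+1 m); lia.
  by rewrite /F /=; congr (_ *: at_x23_1 (phi _ _ _)); lia.
have eU3 : (n%:R / n.+1%:R) *: at_x23_1 (ext phi (n + m)%:Z (n%:Z + -1) (m%:Z + 1))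
    = (n%:R / n.+1%:R) *: F phi n.-1 m.+1.
  case: n {E' E23 A eA1 eA2 eU2} => [|n].
    by rewrite !mul0r; apply: (etrans (scale0r _)); apply: esym; exact: scale0r.
  rewrite ext_adm; last by apply: (@adm_edge _ _ _ n m.+1); lia.
  by rewrite /F /=; congr (_ *: at_x23_1 (phi _ _ _)); lia.
rewrite eA2 eU2 eU3 in E'.
rewrite eA1 /=.
change (at_x23_1 (phi (n+m)%:Z n%:Z m%:Z)) with (F phi n m) in E'.
clearbody A.
clear eA1 eA2 eU2 eU3 E23 Hr. move: (F phi n.+1 m.+1) (F phi n.-1 m.+1) (F phi n m) (F phi n.+1 m.-1) A E' => X1 X2 X3 X4 Y E'.
set kA := (m.+1%:R / ((n + m.+1).+1 * n.+1)%:R : C).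
set u1 := ((n + m).+2%:R / (n.+1 * m.+1)%:R : C).
set u2 := (m%:R / m.+1%:R : C).
set s := (n%:R / n.+1%:R : C).
have hA : u1 *: Y = 2 *: X3 - u2 *: X4 - s *: X2 by rewrite E'; ring.
have u1nz : u1 != 0 by rewrite /u1 mulf_neq0 // ?invr_eq0 pnatr_eq0 // muln_eq0.
have -> : kA *: Y = (kA / u1) *: (u1 *: Y) by rewrite scalerA divfK.
rewrite hA.
have ec2 : c2 n m.+1 = s - kA / u1 * s by rewrite /c2 /s /kA /u1; field; nzt.
have ec3 : c3 n m.+1 = kA / u1 * 2 by rewrite /c3 /kA /u1; field; nzt.
have ec4 : c4 n m.+1 = - (kA / u1 * u2) by rewrite /c4 /kA /u1 /u2 /=; field; nzt.
rewrite ec2 ec3 ec4 !scalerBr !scalerA scalerBl scaleNr.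
ring.
Qed.

Lemma F_base phi : is_genus2_schur phi -> forall m,
  y13 * F phi 0 m = b1 m *: F phi 0 m.+1 + b2 m *: F phi 0 m.-1.
Proof.
move=> [_ Hr] m.
have [_ E13 _] := Hr _ _ _ (@adm_edge _ _ _ 0 m erefl erefl erefl).
have E := congr1 at_x23_1 E13.
rewrite at_mul at_y13 /signs !big_cons !big_nil !addr0 !at_add !at_scale in E.
rewrite !add0n (V1 m) (V2 m) (V3 m) (V4 m) in E.
have e1 : at_x23_1 (ext phi (m%:Z + 1) 0%:Z (m%:Z + 1)) = F phi 0 m.+1.
  rewrite ext_adm; last by apply: (@adm_edge _ _ _ 0 m.+1); lia.
  by rewrite /F; congr (at_x23_1 (phi _ _ _)); lia.
have e4 : b2 m *: at_x23_1 (ext phi (m%:Z + -1) 0%:Z (m%:Z + -1)) = b2 m *: F phi 0 m.-1.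
  case: m {E E13 e1} => [|m].
    by rewrite /b2 !mul0r; apply: (etrans (scale0r _)); apply: esym; exact: scale0r.
  rewrite ext_adm; last by apply: (@adm_edge _ _ _ 0 m); lia.
  by rewrite /F; congr (_ *: at_x23_1 (phi _ _ _)); lia.
rewrite e1 e4 in E.
change (at_x23_1 (phi m%:Z 0%:Z m%:Z)) with (F phi 0 m) in E.
rewrite E.
move: (F phi 0 m.+1) (F phi 0 m.-1) (at_x23_1 (ext phi (m%:Z + 1) 0%:Z (m%:Z + -1)))
  (at_x23_1 (ext phi (m%:Z + -1) 0%:Z (m%:Z + 1))) => X1 X2 Y1 Y2.
rewrite (scale0r Y1) (scale0r Y2).
ring.
Qed.

Lemma F00 phi : is_genus2_schur phi -> F phi 0 0 = 1.
Proof. by move=> [H0 _]; rewrite /F H0 /at_x23_1 comp_mpoly1. Qed.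


Lemma c1nz n m : c1 n m != 0.
Proof. by rewrite /c1 mulf_neq0 // ?invr_eq0 pnatr_eq0. Qed.
Lemma b1nz m : b1 m != 0.
Proof. by rewrite /b1 mulf_neq0 // ?invr_eq0 pnatr_eq0. Qed.

Lemma FG phi : is_genus2_schur phi -> forall n m, F phi n m = G n m.
Proof.
move=> Hp.
suff H : forall T n m, (n + m <= T)%N -> F phi n m = G n m by move=> n m; exact: (H (n + m)%N).
elim=> [|T IH] n m hT.
  have [-> ->] : n = 0%N /\ m = 0%N by lia.
  by rewrite F00 // G00.
case: (leqP (n + m) T) => hle; first exact: IH.
case: n hT hle => [|n] hT hle.
  have em : m = T.+1 by lia.
  subst m.
  have SF := F_base phi Hp T; have SG := G_base T.
  rewrite (IH 0%N T) ?(IH 0%N T.-1) in SF; try lia.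
  have := etrans (esym SF) SG.
  move: (F phi 0 T.+1) (G 0 T.+1) (b2 T *: G 0 T.-1) => X Y Z.
  by move/addIr/(scalerI (b1nz T)).
have SF := F_step phi Hp n m; have SG := G_step n m.
have e4 : c4 n m *: F phi n.+1 m.-2 = c4 n m *: G n.+1 m.-2.
  case: m {SF SG} hT hle => [|[|m]] hT hle.
  - by rewrite /c4 /= muln0 oppr0 !mul0r; apply: (etrans (scale0r _)); apply: esym; exact: scale0r.
  - by rewrite /c4 /= muln0 oppr0 !mul0r; apply: (etrans (scale0r _)); apply: esym; exact: scale0r.
  by rewrite IH //; lia.
rewrite e4 (IH n m) ?(IH n.-1 m) ?(IH n m.-1) in SF; try lia.
have := etrans (esym SF) SG.
move: (F phi n.+1 m) (G n.+1 m) (c2 n m *: G n.-1 m) (c3 n m *: G n m.-1) (c4 n m *: G n.+1 m.-2) => X Y Z1 Z2 Z3.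
by rewrite -!addrA => /addIr/(scalerI (c1nz n m)).
Qed.

Lemma coef_cG n m a b : (a <= n)%N -> (b <= m)%N ->
  coef_c (n + m) n (n - a) (m - b) = cG n m a b.
Proof.
move=> ha hb.
rewrite /coef_c /cG /h.
have es : (n - a + (m - b))%N = (n + m - (a + b))%N by lia.
have hd : (a + b <= n + m)%N by lia.
rewrite es hd addKn (bin_sub ha) (bin_sub hb) /=.
move: (n + m - (a + b))%N => s.
case: (boolP (odd s)) => hodd /=; first by rewrite mulr0.
have [k ->] : exists k, s = k.*2.
  exists s./2; have := odd_double_half s; by rewrite (negbTE hodd) add0n.
rewrite divn2 doubleK /hk addn1 natrM -!mul2n.
field; nzt.
Qed.

Lemma sum_widen (g : nat -> HH) k K : (k <= K)%N ->
  (forall i, (k <= i)%N -> g i = 0) -> \sum_(i < K) g i = \sum_(i < k) g i.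
Proof.
move=> hle hz; rewrite (big_ord_widen K g hle) [RHS]big_mkcond /=.
apply: eq_bigr => i _; case: ifP => // /negbT; rewrite -leqNgt => h.
exact: hz.
Qed.

Lemma cG_za n m a b : (n < a)%N -> cG n m a b = 0.
Proof. by move=> h; rewrite /cG bin_small ?mul0n ?mul0r. Qed.
Lemma cG_zb n m a b : (m < b)%N -> cG n m a b = 0.
Proof. by move=> h; rewrite /cG (@bin_small m b) ?muln0 ?mul0r. Qed.

Lemma RHS_G n m :
  \sum_(a < n.+1) \sum_(b < (n + m - n).+1)
     coef_c (n + m) n a b *: (y12 ^+ (n - a) * y13 ^+ (n + m - n - b)) = G n m.
Proof.
rewrite addKn.
transitivity (\sum_(a < n.+1) \sum_(b < m.+1) cG n m a b *: mono a b).
  rewrite (reindex_inj rev_ord_inj); apply: eq_bigr => a _.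
  rewrite (reindex_inj rev_ord_inj); apply: eq_bigr => b _ /=.
  have ha : (a <= n)%N by rewrite -ltnS.
  have hb : (b <= m)%N by rewrite -ltnS.
  by rewrite !subSS (subKn ha) (subKn hb) coef_cG ?leq_subr.
rewrite /G /S.
rewrite (@sum_widen (fun a => \sum_(b < (n + m).+1) cG n m a b *: mono a b) n.+1); last first.
- move=> i hi; apply: big1 => b _.
  by rewrite cG_za ?scale0r.
- lia.
apply: eq_bigr => a _.
rewrite (@sum_widen (fun b => cG n m a b *: mono a b) m.+1 (n + m).+1) //; try lia.
move=> i hi /=; by rewrite cG_zb ?scale0r.
Qed.

Theorem mainTheorem14 (phi : int -> int -> int -> HH) (j1 j2 : nat) :
  is_genus2_schur phi -> (j2 <= j1)%N ->
  at_x23_1 (phi j1%:Z j2%:Z (j1 - j2)%N%:Z) =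
  \sum_(a < j2.+1) \sum_(b < (j1 - j2).+1)
     coef_c j1 j2 a b *: (y12 ^+ (j2 - a) * y13 ^+ (j1 - j2 - b)).
Proof.
move=> Hp hj.
have [m ->] : exists m, j1 = (j2 + m)%N by exists (j1 - j2)%N; rewrite subnKC.
rewrite RHS_G -(FG phi Hp) /F addKn.
done.
Qed.
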